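(* Let $p\ge1$, $X=\{0,1,\dots,p\}$, and for $i\in\{1,\dots,p\}$ let $e_i$ be the transformation of $X^\ast$ defined recursively (with $\emptyset\mapsto\emptyset$) by $e_i(0w)=i\,e_i(w)$, $e_i(iw)=0w$, $e_i(jw)=jw$ for $j\notin\{0,i\}$. For $n\ge1$ let $A_n=\sum_{i=1}^p\bigl(M^{(n)}_i+(M^{(n)}_i)^{-1}\bigr)$, where $M^{(n)}_i$ is the $(p+1)^n\times(p+1)^n$ permutation matrix of the action of $e_i$ on $X^n$, and let $P_n(\lambda)=\det(\lambda I-A_n)$. Then for every $n\ge1$ $$P_{n+1}(\lambda)=\bigl(\lambda-2(p-1)\bigr)^{(p-1)(p+1)^n}\,P_n(f_p(\lambda)),\qquad f_p(\lambda)=\lambda^2-2(p-1)\lambda-2p,$$ and $P_1(\lambda)=(\lambda-2p)(\lambda+2)(\lambda-2(p-1))^{p-1}$.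
   Context: The group generated by $e_1,\dots,e_p$ is the star automaton group $\mathcal G_{S_p}$; $A_n$ is the adjacency matrix of its $n$-th Schreier graph $\Gamma^p_n$ (vertex set $X^n$, an edge joining $v$ and $e_i(v)$ for each $v$ and $i$, loops counted twice on the diagonal). *)

(* Defs.v *)
From mathcomp Require Import all_boot all_order all_algebra.
Set Implicit Arguments. Unset Strict Implicit. Unset Printing Implicit Defensive.
Import GRing.Theory.
Local Open Scope ring_scope.

(* Alphabet X = {0,...,p} is 'I_p.+1; the letter 0 is ord0.
   e_seq i : the transformation e_i of X^* (intended for 1 <= i <= p). *)
Fixpoint e_seq (p : nat) (i : 'I_p.+1) (w : seq 'I_p.+1) : seq 'I_p.+1 :=
  match w with
  | [::] => [::]
  | a :: w' =>
      if a == ord0 then i :: e_seq i w'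
      else if a == i then ord0 :: w'
      else a :: w'
  end.

Lemma size_e_seq p (i : 'I_p.+1) w : size (e_seq i w) = size w.
Proof. elim: w => [|a w IH] //=; case: ifP => _ /=; [by rewrite IH|by case: ifP]. Qed.

Lemma e_tuple_proof p n (i : 'I_p.+1) (t : n.-tuple 'I_p.+1) :
  size (e_seq i t) == n.
Proof. by rewrite size_e_seq size_tuple. Qed.

Definition e_tuple p n (i : 'I_p.+1) (t : n.-tuple 'I_p.+1) : n.-tuple 'I_p.+1 :=
  Tuple (e_tuple_proof i t).

(* Vertex set X^n, indexed by 'I_#|X^n| through the canonical enumeration. *)
Notation Nwords p n := #|{: n.-tuple 'I_p.+1}|.

Definition Mperm p n (i : 'I_p.+1) : 'M[int]_(Nwords p n) :=
  \matrix_(a, b) ((enum_val a == e_tuple i (enum_val b))%:R : int).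

Definition Amat p n : 'M[int]_(Nwords p n) :=
  \sum_(i < p.+1 | (0 < i)%N) (Mperm n i + invmx (Mperm n i)).

Definition Ppoly p n : {poly int} := char_poly (Amat p n).

Definition fp (p : nat) : {poly int} :=
  'X^2 - ((2 * (p - 1))%:R : int) *: 'X - ((2 * p)%:R : int)%:P.

(* Main.v *)
Require Import Defs.
From mathcomp Require Import all_boot all_order all_algebra all_fingroup ring.
Set Implicit Arguments. Unset Strict Implicit. Unset Printing Implicit Defensive.
Import GRing.Theory.
Local Open Scope ring_scope.


Fixpoint e_inv (p : nat) (i : 'I_p.+1) (w : seq 'I_p.+1) : seq 'I_p.+1 :=
  match w with
  | [::] => [::]
  | a :: w' =>
      if a == i then ord0 :: e_inv i w'
      else if a == ord0 then i :: w'
      else a :: w'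
  end.

Lemma e_seqK p (i : 'I_p.+1) : cancel (e_seq i) (e_inv i).
Proof.
elim=> [|a w IH] //=.
case: (eqVneq a ord0) => [->|a0] /=; first by rewrite eqxx IH.
case: (eqVneq a i) => [ai|ai] /=.
  by rewrite -ai eq_sym (negbTE a0).
by rewrite (negbTE ai) (negbTE a0).
Qed.

Lemma e_tuple_inj p n (i : 'I_p.+1) : injective (@e_tuple p n i).
Proof.
move=> u v /(congr1 val) /= /(can_inj (@e_seqK p i)) h; exact: val_inj.
Qed.

Definition Mt p n (i : 'I_p.+1) := Mperm n i.

Lemma Mperm_tr p n (i : 'I_p.+1) : (Mperm n i)^T *m Mperm n i = 1%:M.
Proof.
apply/matrixP=> a b; rewrite !mxE.
rewrite (bigD1 (enum_rank (e_tuple i (enum_val a)))) //= big1 => [|k hk].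
  rewrite !mxE enum_rankK eqxx mul1r addr0.
  by rewrite (inj_eq (@e_tuple_inj _ _ _)) (inj_eq enum_val_inj).
rewrite !mxE; case: eqP => [h|]; last by rewrite mul0r.
by move: hk; rewrite -h enum_valK eqxx.
Qed.

Lemma invmx_Mperm p n (i : 'I_p.+1) : invmx (Mperm n i) = (Mperm n i)^T.
Proof.
have [_ u] := mulmx1_unit (Mperm_tr n i).
by rewrite -[LHS]mul1mx -(Mperm_tr n i) -mulmxA mulmxV // mulmx1.
Qed.

Definition adjs p (u v : seq 'I_p.+1) : int :=
  \sum_(j < p) ((u == e_seq (lift ord0 j) v)%:R + (v == e_seq (lift ord0 j) u)%:R).

Lemma Amat_E p n a b : Amat p n a b = adjs (enum_val a : seq _) (enum_val b).
Proof.
rewrite /Amat summxE big_mkcond big_ord_recl /= add0r /adjs.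
apply: eq_bigr => j _; by rewrite /= invmx_Mperm !mxE.
Qed.


Section Adj.
Variable p : nat.
Local Notation x j := (lift (ord0 : 'I_p.+1) j).

Lemma x0 (j : 'I_p) : (x j == ord0) = false.
Proof. by rewrite eq_sym (negbTE (neq_lift _ _)). Qed.

Lemma xx (j k : 'I_p) : (x j == x k) = (j == k).
Proof. exact: (inj_eq (@lift_inj _ ord0)). Qed.

Lemma adjs_sym (u v : seq 'I_p.+1) : adjs u v = adjs v u.
Proof. by apply: eq_bigr => j _; rewrite addrC. Qed.

Lemma adjs00 (u v : seq 'I_p.+1) : adjs (ord0 :: u) (ord0 :: v) = 0.
Proof. by apply: big1 => j _ /=; rewrite addr0. Qed.

Lemma adjsR0 (j : 'I_p) (u v : seq 'I_p.+1) :
  adjs (x j :: u) (ord0 :: v) = (u == e_seq (x j) v)%:R + (v == u)%:R.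
Proof.
rewrite /adjs (bigD1 j) //= big1 => [|k kj] /=.
  by rewrite !eqseq_cons !eqxx /= addr0.
by rewrite !eqseq_cons !xx (eq_sym j) (negbTE kj) /= addr0.
Qed.

Lemma adjsRR (j k : 'I_p) (u v : seq 'I_p.+1) :
  adjs (x j :: u) (x k :: v) = ((j == k) && (u == v))%:R * (2 * (p - 1))%:R.
Proof.
rewrite /adjs /=.
have h : forall (a b : 'I_p) (s t : seq 'I_p.+1),
   \sum_(l < p) ((x a :: s == (if x b == x l then ord0 :: t else x b :: t))%:R : int)
   = ((a == b) && (s == t))%:R * (p - 1)%:R.
  move=> a b s t; rewrite (bigD1 b) //= eqxx eqseq_cons eq_sym (negbTE (neq_lift _ _)) add0r.
  rewrite (eq_bigr (fun _ => ((a == b) && (s == t))%:R)) => [|l lb]; last first.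
    by rewrite xx (eq_sym b) (negbTE lb) eqseq_cons xx.
  rewrite sumr_const mulr_natr; congr (_ *+ _).
  have := cardC1 b; rewrite card_ord subn1 => <-; exact: eq_card.
rewrite big_split /= h h (eq_sym k) (eq_sym v) -mulrDr; congr (_ * _).
by rewrite -natrD; congr (_%:R); rewrite mul2n addnn.
Qed.

End Adj.


Lemma char_poly_reindex (R : comNzRingType) m n (e : m = n) (f : 'I_m -> 'I_n)
  (A : 'M[R]_n) : injective f ->
  char_poly (\matrix_(i, j) A (f i) (f j)) = char_poly A.
Proof.
case: n / e in f A *; move=> finj; pose s := perm finj; rewrite /char_poly.
have -> : char_poly_mx (\matrix_(i, j) A (f i) (f j)) =
          row_perm s (col_perm s (char_poly_mx A)).
  by apply/matrixP => i j; rewrite !mxE !permE (inj_eq finj).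
rewrite row_permE col_permE !det_mulmx !det_perm odd_permV.
by rewrite mulrCA -expr2 sqrr_sign mulr1.
Qed.


Lemma schur (R : comNzRingType) N K (x a : R) (D : 'M[R]_(K, N)) :
  \det (block_mx (x%:M) D^T D (a%:M)) * a ^+ N
  = \det ((x * a)%:M - D^T *m D) * a ^+ K.
Proof.
have -> : a ^+ N = \det (block_mx (a%:M : 'M_N) 0 (- D) 1%:M).
  by rewrite det_lblock det_scalar det1 mulr1.
rewrite -det_mulmx mulmx_block !mulmx0 !mulmx1 !add0r mulmxN mul_scalar_mx.
rewrite mul_mx_scalar mul_scalar_mx scalerN subrr.
by rewrite det_ublock det_scalar scale_scalar_mx.
Qed.

Lemma char_poly_comp (R : comNzRingType) n (A : 'M[R]_n) q :
  char_poly A \Po q = \det (q%:M - map_mx polyC A).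
Proof.
rewrite /char_poly -det_map_mx; congr (\det _); apply/matrixP => i j.
by rewrite !mxE rmorphB rmorphMn /= comp_polyX comp_polyC.
Qed.


Section Main.
Variables p n : nat.
Local Notation T := (n.-tuple 'I_p.+1).
Local Notation N := #|{: T}|.
Local Notation w k := (enum_val k : T).
Local Notation x j := (lift (ord0 : 'I_p.+1) j).

Lemma eP : (p * N)%N = #|{: 'I_p * 'I_N}|.
Proof. by rewrite card_prod !card_ord. Qed.

Definition pr (r : 'I_(p * N)) : 'I_p * 'I_N := enum_val (cast_ord eP r).
Definition prinv (jk : 'I_p * 'I_N) : 'I_(p * N) := cast_ord (esym eP) (enum_rank jk).

Lemma prK : cancel pr prinv.
Proof. by move=> r; rewrite /pr /prinv enum_valK cast_ordK. Qed.
Lemma prinvK : cancel prinv pr.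
Proof. by move=> jk; rewrite /pr /prinv cast_ordKV enum_rankK. Qed.
Lemma pr_inj : injective pr. Proof. exact: can_inj prK. Qed.

Definition Wd (s : 'I_N + 'I_(p * N)) : n.+1.-tuple 'I_p.+1 :=
  match s with
  | inl k => cons_tuple ord0 (w k)
  | inr r => cons_tuple (x (pr r).1) (w (pr r).2)
  end.
Definition W (r : 'I_(N + p * N)) := Wd (split r).

Lemma WL k : W (lshift _ k) = cons_tuple ord0 (w k).
Proof. by rewrite /W (unsplitK (inl _ k)). Qed.
Lemma WR r : W (rshift _ r) = cons_tuple (x (pr r).1) (w (pr r).2).
Proof. by rewrite /W (unsplitK (inr _ r)). Qed.

Lemma Wd_inj : injective Wd.
Proof.
move=> [k|r] [k'|r'] /(congr1 val) /= /eqP; rewrite eqseq_cons.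
- by case/andP => _ /eqP /val_inj /enum_val_inj ->.
- by case/andP => /eqP /(congr1 val) /=; rewrite /bump add1n.
- by case/andP => /eqP /(congr1 val) /=; rewrite /bump add1n.
case/andP => /eqP /lift_inj h /eqP /val_inj /enum_val_inj h'.
by congr inr; apply: pr_inj; rewrite [pr r]surjective_pairing h h' -surjective_pairing.
Qed.

Lemma W_inj : injective W.
Proof. by move=> r s /Wd_inj /(can_inj splitK). Qed.

Lemma eN : (N + p * N)%N = #|{: n.+1.-tuple 'I_p.+1}|.
Proof. by rewrite !card_tuple card_ord expnS mulSn. Qed.

Definition phi (r : 'I_(N + p * N)) := enum_rank (W r).

Lemma phi_inj : injective phi.
Proof. by move=> r s /enum_rank_inj /W_inj. Qed.

Definition A' := \matrix_(r, s) Amat p n.+1 (phi r) (phi s).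

Lemma A'E r s : A' r s = adjs (W r : seq _) (W s).
Proof. by rewrite mxE Amat_E !enum_rankK. Qed.

Lemma phiE r s : Amat p n.+1 (phi r) (phi s) = adjs (W r : seq _) (W s).
Proof. by rewrite Amat_E !enum_rankK. Qed.


Lemma weq (k k' : 'I_N) : (val (w k) == val (w k')) = (k == k').
Proof. by rewrite (inj_eq val_inj) (inj_eq enum_val_inj). Qed.

Definition Bm : 'M[int]_(p * N, N) :=
  \matrix_(r, b) ((w (pr r).2 == e_tuple (x (pr r).1) (w b))%:R
                  + (w b == w (pr r).2)%:R).

Local Notation Q := (char_poly_mx A').

Lemma Qul : ulsubmx Q = 'X%:M.
Proof.
apply/matrixP => a b; rewrite !mxE phiE !WL /= adjs00 eq_lshift.
by rewrite polyC0 subr0.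
Qed.

Lemma Qdl : dlsubmx Q = - map_mx polyC Bm.
Proof.
apply/matrixP => r b; rewrite !mxE phiE WR WL /= adjsR0 eq_rlshift /= add0r.
by [].
Qed.

Lemma Qur : ursubmx Q = (- map_mx polyC Bm)^T.
Proof.
apply/matrixP => b r; rewrite !mxE phiE WR WL /= adjs_sym adjsR0 eq_lrshift /= add0r.
by [].
Qed.

Lemma Qdr : drsubmx Q = ('X - ((2 * (p - 1))%:R : int)%:P)%:M.
Proof.
apply/matrixP => r s; rewrite !mxE phiE !WR /= adjsRR eq_rshift.
rewrite weq -(inj_eq pr_inj).
case: (pr r) (pr s) => [j k] [j' k'] /=; rewrite xpair_eqE.
by case: (_ && _); rewrite /= ?mul1r ?mul0r ?polyC0 ?subr0.
Qed.


Lemma sum_delta (s t : T) :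
  \sum_(k < N) ((w k == s)%:R * (w k == t)%:R : int) = (s == t)%:R.
Proof.
rewrite (bigD1 (enum_rank s)) //= big1 => [|k hk].
  by rewrite enum_rankK eqxx mul1r addr0.
case: eqP => [h|]; last by rewrite mul0r.
by move: hk; rewrite -h enum_valK eqxx.
Qed.

Lemma sum_inner (s1 t1 s2 t2 : T) :
  \sum_(k < N) ((((w k == s1)%:R + (t1 == w k)%:R) *
                 ((w k == s2)%:R + (t2 == w k)%:R)) : int)
  = (s1 == s2)%:R + (s1 == t2)%:R + ((t1 == s2)%:R + (t1 == t2)%:R).
Proof.
under eq_bigr do rewrite (eq_sym t1) (eq_sym t2) mulrDl !mulrDr.
by rewrite !big_split /= !sum_delta.
Qed.

Lemma BtB : Bm^T *m Bm = ((2 * p)%:R : int)%:M + Amat p n.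
Proof.
apply/matrixP => a b; rewrite !mxE Amat_E.
rewrite (reindex prinv) /=; last by exists pr => r _; rewrite ?prK ?prinvK.
under eq_bigr do rewrite !mxE prinvK.
rewrite -(pair_bigA _ (fun j k => (((w k == e_tuple (x j) (w a))%:R + (w a == w k)%:R) *
    ((w k == e_tuple (x j) (w b))%:R + (w b == w k)%:R)) : int)) /=.
under eq_bigr => i _ do rewrite sum_inner.
rewrite (eq_bigr (fun i => ((w a == e_tuple (x i) (w b))%:R + (w b == e_tuple (x i) (w a))%:R)
   + ((a == b)%:R *+ 2 : int))); last first.
  move=> i _; rewrite (inj_eq (@e_tuple_inj _ _ _)) (inj_eq enum_val_inj) (eq_sym _ (w b)).
  by rewrite mulr2n; ring.
rewrite big_split /= sumr_const card_ord addrC; congr (_ + _).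
by case: (a == b); rewrite /= ?mul0rn ?mulr0n // -mulrnA mul2n.
Qed.
End Main.


Lemma recurrence p n : (0 < p)%N ->
  Ppoly p n.+1 =
    ('X - ((2 * (p - 1))%:R : int)%:P) ^+ ((p - 1) * #|{: n.-tuple 'I_p.+1}|)
    * (Ppoly p n \Po fp p).
Proof.
move=> hp.
set N := #|{: n.-tuple 'I_p.+1}|.
set a := 'X - ((2 * (p - 1))%:R : int)%:P.
have a0 : a != 0 by rewrite polyXsubC_eq0.
rewrite /Ppoly -(char_poly_reindex (eN p n) _ (@phi_inj p n)) -/(A' p n).
apply: (mulIf (expf_neq0 N a0)).
rewrite {1}/char_poly -[char_poly_mx _]submxK Qul Qdl Qur Qdr -/a schur.
rewrite char_poly_comp mulrAC -exprD.
have -> : ((p - 1) * N + N = p * N)%N by rewrite -mulSnr subn1 prednK.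
rewrite mulrC; congr (_ * _); congr (\det _).
rewrite linearN /= [(- _)^T]linearN /= mulNmx !opprK map_trmx -map_mxM BtB map_mxD map_scalar_mx.
rewrite opprD addrA; congr (_ - _); apply/matrixP => i j; rewrite !mxE -mulrnBl.
congr (_ *+ _); rewrite /fp /a -mul_polyC mulrBr -expr2; ring.
Qed.


Lemma P0 p : Ppoly p 0 = 'X - ((2 * p)%:R : int)%:P.
Proof.
have e : 1%N = #|{: 0.-tuple 'I_p.+1}| by rewrite card_tuple expn0.
pose f := fun _ : 'I_1 => enum_rank ([tuple] : 0.-tuple 'I_p.+1).
have finj : injective f by move=> i j _; rewrite !ord1.
rewrite /Ppoly -(char_poly_reindex e _ finj) /char_poly det_mx11 !mxE Amat_E /adjs /=.
rewrite /f enum_rankK /= (eq_bigr (fun _ => 1 + 1)) // sumr_const card_ord -mulr2n -mulrnA mul2n.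
by [].
Qed.

Unset Implicit Arguments.

Theorem theorem3p8 (p : nat) (hp : (1 <= p)%N) :
  (forall n : nat, (1 <= n)%N ->
     Ppoly p n.+1 =
       ('X - ((2 * (p - 1))%:R : int)%:P) ^+ ((p - 1) * (p + 1) ^ n)
       * (Ppoly p n \Po fp p))
  /\
  Ppoly p 1 =
    ('X - ((2 * p)%:R : int)%:P) * ('X + (2%:R : int)%:P)
    * ('X - ((2 * (p - 1))%:R : int)%:P) ^+ (p - 1).
Proof.
split.
  by move=> n _; rewrite recurrence // card_tuple card_ord addn1.
rewrite recurrence // card_tuple expn0 muln1 P0 mulrC; congr (_ * _).
rewrite comp_polyB comp_polyX comp_polyC /fp -mul_polyC !polyC_natr.
case: p hp => // p _; rewrite subn1 /=; ring.
Qed.
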